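(* Let $N\ge1$, let $\tilde\chi$ be a Dirichlet character modulo $N$ with associated character $\chi$ on $\Gamma_0^{(2)}(N)$, let $f\in S_2^k(\Gamma_0^{(2)}(N),\chi)$, and let $s$ be a symmetric positive definite $2\times2$ integral matrix with $l'=\det(s)$. Then for every $d\in(\mathbb{Z}/l'N\mathbb{Z})^\times$, \[\langle d\rangle\,\phi_s^*(f)=\chi(dI_2)\,\phi_s^*(f).\]
   Context: $\Gamma_0^{(2)}(N)=\{\begin{pmatrix}A&B\\C&D\end{pmatrix}\in \mathrm{Sp}_4(\mathbb{Z}) : C\equiv 0 \pmod N\}$. For $M=\begin{pmatrix}A&B\\C&D\end{pmatrix}$, $F|_kM(Z)=\det(CZ+D)^{-k}F((AZ+B)(CZ+D)^{-1})$ on the Siegel upper half space $\mathbb{H}_2$ of genus 2. The character is $\chi(M)=\tilde\chi(\det D)$, and more generally for an integral $2\times2$ matrix $D$ one writes $\chi(D)=\tilde\chi(\det D)$ (so $\chi(dI_2)=\tilde\chi(d^2)$, with $d$ reduced modulo $N$). $S_2^k(\Gamma_0^{(2)}(N),\chi)$ is the space of Siegel cusp forms $f$ of degree 2, weight $k$ with $f|_kM=\chi(M)f$ for all $M\in\Gamma_0^{(2)}(N)$. The restriction $\phi_s^*(f)(\tau)=f(s\tau)$ ($\tau$ in the upper half plane) is an elliptic cusp form of weight $2k$ on $\Gamma_1(Nl')$. For $g$ of weight $2k$ on $\Gamma_1(Nl')$ and $d\in(\mathbb{Z}/l'N\mathbb{Z})^\times$, the diamond operator is $\langle d\rangle g=g|_{2k}\alpha$,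 $(g|_{2k}\alpha)(\tau)=(c\tau+\delta)^{-2k}g(\alpha\tau)$, for any $\alpha=\begin{pmatrix}a&b\\c&\delta\end{pmatrix}\in\Gamma_0(Nl')$ with $\delta\equiv d\pmod{Nl'}$. *)

(* Defs.v *)
From HB Require Import structures.
From mathcomp Require Import all_boot all_order all_algebra.
From mathcomp Require Import reals.
From mathcomp Require Import complex.
Set Implicit Arguments. Unset Strict Implicit. Unset Printing Implicit Defensive.
Import Order.TTheory GRing.Theory Num.Theory.
Local Open Scope ring_scope.

Definition intmx (T : pzRingType) m n (M : 'M[int]_(m, n)) : 'M[T]_(m, n) :=
  map_mx (fun z : int => z%:~R) M.

Definition Jmx : 'M[int]_(2 + 2) := block_mx 0 1%:M (- 1%:M) 0.

Definition is_Sp4 (M : 'M[int]_(2 + 2)) : Prop := M^T *m Jmx *m M = Jmx.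

Definition blkA (M : 'M[int]_(2 + 2)) : 'M[int]_2 := ulsubmx M.
Definition blkB (M : 'M[int]_(2 + 2)) : 'M[int]_2 := ursubmx M.
Definition blkC (M : 'M[int]_(2 + 2)) : 'M[int]_2 := dlsubmx M.
Definition blkD (M : 'M[int]_(2 + 2)) : 'M[int]_2 := drsubmx M.

Definition in_Gamma0_2 (N : nat) (M : 'M[int]_(2 + 2)) : Prop :=
  is_Sp4 M /\ forall i j : 'I_2, (N%:Z %| blkC M i j)%Z.

Definition posdef2 (R : realType) (Y : 'M[R]_2) : Prop :=
  Y^T = Y /\ forall x : 'cV[R]_2, x != 0 -> 0 < (x^T *m Y *m x) 0 0.

Definition siegelH (R : realType) (Z : 'M[R[i]]_2) : Prop :=
  Z^T = Z /\ posdef2 (map_mx (@complex.Im R) Z).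

Definition slash2 (R : realType) (k : nat) (M : 'M[int]_(2 + 2))
  (F : 'M[R[i]]_2 -> R[i]) (Z : 'M[R[i]]_2) : R[i] :=
  let A := intmx R[i] (blkA M) in let B := intmx R[i] (blkB M) in
  let C := intmx R[i] (blkC M) in let D := intmx R[i] (blkD M) in
  (\det (C *m Z + D)) ^- k * F ((A *m Z + B) *m invmx (C *m Z + D)).

Definition is_dirichlet_char (R : realType) (N : nat) (chi : int -> R[i]) : Prop :=
  [/\ forall a : int, chi (a + N%:Z) = chi a,
      forall a b : int, chi (a * b) = chi a * chi b,
      chi 1 = 1
    & forall a : int, chi a != 0 <-> coprimez a N%:Z].

Definition symmx (R : realType) (z1 z2 z3 : R[i]) : 'M[R[i]]_2 :=
  \matrix_(i < 2, j < 2)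
    (if i == j then (if (i : nat) == 0%N then z1 else z3) else z2).

(* holomorphy on H_2 (Osgood): continuous and complex differentiable in each of
   the three symmetric coordinates z11, z12, z22 *)
Definition continuous_on_H2 (R : realType) (F : 'M[R[i]]_2 -> R[i]) : Prop :=
  forall Z, siegelH Z -> forall eps : R[i], 0 < eps -> exists2 del : R[i], 0 < del &
    forall W, siegelH W -> (forall i j, `|W i j - Z i j| < del) -> `|F W - F Z| < eps.

Definition cderivable_dir (R : realType) (F : 'M[R[i]]_2 -> R[i]) (Z E : 'M[R[i]]_2) :
  Prop :=
  exists L : R[i], forall eps : R[i], 0 < eps -> exists2 del : R[i], 0 < del &
    forall h : R[i], 0 < `|h| < del -> siegelH (Z + h *: E) ->
      `|(F (Z + h *: E) - F Z) / h - L| < eps.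

Definition holomorphic_H2 (R : realType) (F : 'M[R[i]]_2 -> R[i]) : Prop :=
  continuous_on_H2 F /\
  forall Z, siegelH Z ->
    [/\ cderivable_dir F Z (symmx 1 0 0),
        cderivable_dir F Z (symmx 0 1 0)
      & cderivable_dir F Z (symmx 0 0 1)].

(* cusp condition: Siegel's Phi operator kills F |_k gamma for all gamma in Sp_4(Z) *)
Definition cuspidal2 (R : realType) (k : nat) (F : 'M[R[i]]_2 -> R[i]) : Prop :=
  forall gamma, is_Sp4 gamma -> forall tau : R[i], 0 < complex.Im tau ->
    forall eps : R, 0 < eps -> exists T : R, forall t : R, T < t ->
      `|slash2 k gamma F (symmx tau 0 (Complex 0 t))| < Complex eps 0.

Definition chiM (R : realType) (chi : int -> R[i]) (M : 'M[int]_(2 + 2)) : R[i] :=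
  chi (\det (blkD M)).

Definition siegel_cusp_form (R : realType) (N k : nat) (chi : int -> R[i])
  (F : 'M[R[i]]_2 -> R[i]) : Prop :=
  [/\ holomorphic_H2 F, cuspidal2 k F &
      forall M, in_Gamma0_2 N M -> forall Z, siegelH Z ->
        slash2 k M F Z = chiM chi M * F Z].

Definition phi_s (R : realType) (s : 'M[int]_2) (F : 'M[R[i]]_2 -> R[i])
  (tau : R[i]) : R[i] := F (tau *: intmx R[i] s).

Definition in_Gamma0 (M : int) (al : 'M[int]_2) : Prop :=
  \det al = 1 /\ (M %| al 1%R 0%R)%Z.

Definition slash1 (R : realType) (w : nat) (al : 'M[int]_2) (g : R[i] -> R[i])
  (tau : R[i]) : R[i] :=
  let a := (al 0 0)%:~R in let b := (al 0 1)%:~R in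
  let c := (al 1 0)%:~R in let dl := (al 1 1)%:~R in
  (c * tau + dl) ^- w * g ((a * tau + b) / (c * tau + dl)).

(* Main.v *)
Require Import Defs.
From HB Require Import structures.
From mathcomp Require Import all_boot all_order all_algebra.
From mathcomp Require Import reals.
From mathcomp Require Import complex.
From mathcomp Require Import ring.
Import Order.TTheory GRing.Theory Num.Theory.
Local Open Scope ring_scope.
Lemma intmxM (T : comPzRingType) n (A B : 'M[int]_n) : intmx T (A *m B) = intmx T A *m intmx T B.
Proof. rewrite /intmx. exact: (map_mxM (intr : {rmorphism int -> T})). Qed.
Lemma intmxZ (T : comPzRingType) m n x (A : 'M[int]_(m,n)) : intmx T (x *: A) = x%:~R *: intmx T A.
Proof. by apply/matrixP=> i j; rewrite !mxE intrM. Qed.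
Lemma intmxS (T : comPzRingType) n x : intmx T (x%:M : 'M_n) = x%:~R%:M.
Proof. by apply/matrixP=> i j; rewrite !mxE; case: (i == j). Qed.
Lemma intmxD (T : comPzRingType) m n (A B : 'M[int]_(m,n)) : intmx T (A + B) = intmx T A + intmx T B.
Proof. by apply/matrixP=> i j; rewrite !mxE intrD. Qed.
Lemma det22 (T : comPzRingType) (A : 'M[T]_2) : \det A = A 0 0 * A 1 1 - A 0 1 * A 1 0.
Proof.
rewrite (expand_det_row _ 0) !big_ord_recl big_ord0 /cofactor !det_mx11 /=.
rewrite !mxE /= expr0 expr1 mul1r addr0 mulN1r mulrN.
by congr (A _ _ * A _ _ - A _ _ * A _ _); apply/val_inj.
Qed.
Goal True. idtac. Abort.
Lemma ImMint (R : realType) (tau : R[i]) (x : int) : complex.Im (tau * x%:~R) = complex.Im tau * x%:~R.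
Proof.
have -> : (x%:~R : R[i]) = ((x%:~R : R)%:C)%C by rewrite (rmorph_int (real_complex R)).
by case: tau => t1 t2 /=; rewrite mulr0 add0r.
Qed.

Lemma trmxZ' (T : pzRingType) m n (x : T) (A : 'M[T]_(m,n)) : (x *: A)^T = x *: A^T.
Proof. by apply/matrixP=> i j; rewrite !mxE. Qed.

Lemma chi_per (R : realType) (N : nat) (chi : int -> R[i]) :
  is_dirichlet_char N chi -> forall a z : int, chi (a + N%:Z * z) = chi a.
Proof.
case=> hp _ _ _.
have hn : forall a (n : nat), chi (a + N%:Z * n%:Z) = chi a.
  move=> a; elim=> [|n IH]; first by rewrite mulr0 addr0.
  by rewrite -[n.+1]addn1 PoszD mulrDr mulr1 addrA hp.
move=> a [n|n]; first exact: hn.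
by rewrite -[in LHS](hn (a + N%:Z * Negz n) n.+1) NegzE mulrN addrNK.
Qed.

Theorem lemma4p1 (R : realType) (N : nat) (chi : int -> R[i]) (k : nat)
  (f : 'M[R[i]]_2 -> R[i]) (s : 'M[int]_2) :
  (0 < N)%N ->
  is_dirichlet_char N chi ->
  siegel_cusp_form N k chi f ->
  posdef2 (intmx R s) ->
  forall d : int, coprimez d (N%:Z * \det s) ->
  forall al : 'M[int]_2, in_Gamma0 (N%:Z * \det s) al ->
    (al 1%R 1%R = d %[mod N%:Z * \det s])%Z ->
  forall tau : R[i], 0 < complex.Im tau ->
    slash1 (2 * k) al (phi_s s f) tau = chi (\det (d%:M : 'M[int]_2)) * phi_s s f tau.
Proof.
move=> hN hchi [hhol hcusp hmod] hpos d _ al [hdet hdiv] hcong tau htau.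
have [m hm] := dvdzP hdiv.
set q := m * N%:Z.
have ssym : s^T = s.
  apply/matrixP=> i j; apply: (@intr_inj R).
  have := congr1 (fun M : 'M[R]_2 => M i j) hpos.1.
  by rewrite /intmx !mxE.
have adjsym : (\adj s)^T = \adj s by rewrite trmx_adj ssym.
have hdet2 : al 0 0 * al 1 1 - al 0 1 * al 1 0 = 1 by rewrite -det22.
pose M : 'M[int]_(2 + 2) :=
  block_mx (al 0 0)%:M (al 0 1 *: s) (q *: \adj s) (al 1 1)%:M.
have hM : in_Gamma0_2 N M.
  split.
    rewrite /is_Sp4 /M /Jmx tr_block_mx !mulmx_block.
    rewrite !(mulmx0, mul0mx, mulmx1, mul1mx, addr0, add0r, mulmxN, mulNmx).
    rewrite !trmxZ' !tr_scalar_mx adjsym ssym. rewrite !mul_scalar_mx !mul_mx_scalar addNr.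
    rewrite -!scalemxAl -!scalemxAr mul_adj_mx addNr !scale_scalar_mx.
    have sD : forall x y : int, x%:M + y%:M = (x + y)%:M :> 'M_2.
      by move=> x y; apply/matrixP=> i j; rewrite !mxE; case: (i == j); rewrite ?mulr1n ?mulr0n ?addr0.
    rewrite -!raddfN -!raddfD /= mul_mx_adj !scale_scalar_mx sD.
    by congr block_mx; congr scalar_mx; rewrite -hdet2 hm /q; ring.
  move=> i j; rewrite /blkC /M block_mxKdl mxE /q.
  by rewrite mulrAC; apply: dvdz_mull; apply: dvdzz.
set Z := tau *: intmx R[i] s.
have hZ : siegelH Z.
  split.
    by rewrite /Z trmxZ' /intmx map_trmx ssym.
  have e : map_mx (@complex.Im R) Z = complex.Im tau *: intmx R s.
    by apply/matrixP=> i j; rewrite !mxE ImMint.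
  rewrite e; split; first by rewrite trmxZ' hpos.1.
  move=> x hx; rewrite -scalemxAr -scalemxAl mxE.
  by apply: mulr_gt0 => //; exact: hpos.2.
have hchiM : chiM chi M = chi (\det (d%:M : 'M[int]_2)).
  rewrite /chiM /blkD /M block_mxKdr !det_scalar.
  have [t ht] : exists t, al 1 1 - d = t * (N%:Z * \det s).
    by apply/dvdzP; rewrite -eqz_mod_dvd; apply/eqP.
  have -> : al 1 1 = d + t * (N%:Z * \det s) by rewrite -ht addrC subrK.
  have -> : (d + t * (N%:Z * \det s)) ^+ 2 = d ^+ 2 + N%:Z * (t * \det s * (2 * d + t * (N%:Z * \det s))) by ring.
  exact: chi_per.
have sDC : forall x y : R[i], x%:M + y%:M = (x + y)%:M :> 'M_2.
  by move=> x y; apply/matrixP=> i j; rewrite !mxE; case: (i == j); rewrite ?mulr1n ?mulr0n ?addr0.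
have hslash : slash2 k M f Z = slash1 (2*k) al (phi_s s f) tau.
  rewrite /slash2 /slash1 /phi_s /M /blkA /blkB /blkC /blkD.
  rewrite block_mxKul block_mxKur block_mxKdl block_mxKdr.
  rewrite !intmxZ !intmxS /Z.
  set w := (al 1 0)%:~R * tau + (al 1 1)%:~R.
  have hCD : (q%:~R *: intmx R[i] (\adj s)) *m (tau *: intmx R[i] s) + (al 1 1)%:~R%:M = w%:M.
    rewrite -scalemxAl -scalemxAr -intmxM mul_adj_mx intmxS !scale_scalar_mx sDC.
    by congr scalar_mx; rewrite /w hm /q !intrM; ring.
  have hAB : ((al 0 0)%:~R%:M) *m (tau *: intmx R[i] s) + (al 0 1)%:~R *: intmx R[i] s
      = ((al 0 0)%:~R * tau + (al 0 1)%:~R) *: intmx R[i] s.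
    by rewrite mul_scalar_mx scalerA scalerDl.
  rewrite hCD hAB invmx_scalar mul_mx_scalar scalerA det_scalar -exprM.
  by congr (_ * f (_ *: _)); rewrite mulrC.
rewrite -hslash (hmod M hM Z hZ) hchiM.
by [].
Qed.
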